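(* Let $(\Theta,\mathcal H,\mathbb Q)$ be a probability space, let $g\in\mathcal H$ with $\mathbb Q(g)>0$, and let $\mathcal A$ and $\mathcal B$ be two $\mathbb Q$-independent sub-$\sigma$-fields of $\mathcal H$. Suppose that $\mathbb Q$-a.s. $\mathbb 1_g=AB$ for some $\mathcal A$-measurable $A:\Theta\to[0,\infty]$ and some $\mathcal B$-measurable $B:\Theta\to[0,\infty]$. Then there exist $a\in\mathcal A$ and $b\in\mathcal B$ such that $\mathbb Q$-a.s. $g=a\cap b$, and such $a$, $b$ are $\mathbb Q$-a.s. unique. *)

(* Defs.v *)
From HB Require Import structures.
From mathcomp Require Import all_boot all_order all_algebra.
From mathcomp Require Import all_classical all_reals all_analysis.
From mathcomp Require Import measurable_realfun.
Set Implicit Arguments. Unset Strict Implicit. Unset Printing Implicit Defensive.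
Import Order.TTheory GRing.Theory Num.Theory.
Local Open Scope classical_set_scope.
Local Open Scope ring_scope.

Definition sub_sigma_field d (T : measurableType d) (G : set (set T)) : Prop :=
  sigma_algebra setT G /\ G `<=` measurable.

Definition indep_sigma d (T : measurableType d) (R : realType)
  (Q : probability T R) (G1 G2 : set (set T)) : Prop :=
  forall a b, G1 a -> G2 b -> Q (a `&` b) = (Q a * Q b)%E.

Definition measurable_wrt d (T : measurableType d) (R : realType)
  (G : set (set T)) (f : T -> \bar R) : Prop :=
  forall Y : set (\bar R), measurable Y -> G (f @^-1` Y).

(* Main.v *)
Require Import Defs.
From HB Require Import structures.
From mathcomp Require Import all_boot all_order all_algebra.
From mathcomp Require Import all_classical all_reals all_analysis.
From mathcomp Require Import measurable_realfun.
Import Order.TTheory GRing.Theory Num.Theory.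
Local Open Scope classical_set_scope.
Local Open Scope ring_scope.

Lemma sig_setD (T : Type) (G : set (set T)) (a c : set T) :
  sigma_algebra setT G -> G a -> G c -> G (a `\` c).
Proof.
rewrite /sigma_algebra => -[G0 GC GU] Ga Gc.
have H : G (setT `\` (\bigcup_i bigcup2 (setT `\` a) c i)).
  apply: (GC); apply: (GU) => -[|[|n]] //=; exact: (GC).
by move: H; rewrite bigcup2E !setTD setCU setCK -setDE.
Qed.

Lemma sig_setI (T : Type) (G : set (set T)) (a c : set T) :
  sigma_algebra setT G -> G a -> G c -> G (a `&` c).
Proof.
move=> sG Ga Gc.
have -> : a `&` c = a `\` (setT `\` c) by rewrite setTD setDE setCK.
apply: sig_setD => //; case: sG => _ GC _; exact: GC.
Qed.

Section S.
Variables (d : measure_display) (Theta : measurableType d) (R : realType)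
  (Q : probability Theta R).

Lemma pos_ae (g c : set Theta) : measurable g -> measurable c ->
  (0 < Q g)%E -> {ae Q, forall x, g x <-> c x} -> (0 < Q c)%E.
Proof.
move=> mg mc Qg [N [mN QN sN]].
apply: (lt_le_trans Qg).
have sub : g `<=` c `|` N.
  move=> x gx; case: (pselect (c x)) => cx; [by left|right].
  apply: sN => /= h; apply: cx; exact/h.
apply: (le_trans (le_measure _ _ _ sub)); rewrite ?inE //; first exact: measurableU.
apply: (le_trans (measureU2 _ mc mN)). by rewrite [X in (_ + X <= _)%E]QN adde0.
Qed.

Lemma uniq_half (GA GB : set (set Theta)) (a b a' b' : set Theta) :
  sub_sigma_field GA -> sub_sigma_field GB -> indep_sigma Q GA GB ->
  GA a -> GB b -> GA a' -> GB b' ->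
  (0 < Q (a `&` b))%E -> (0 < Q (a' `&` b'))%E ->
  {ae Q, forall x, (a `&` b) x <-> (a' `&` b') x} ->
  {ae Q, forall x, a x <-> a' x}.
Proof.
move=> [sA mA] [sB mB] ind Ga Gb Ga' Gb' p1 p2 [N [mN QN sN]].
have key : forall u v w, GA u -> GB v -> GA w ->
   (0 < Q (u `&` v))%E -> (u `\` w) `&` v `<=` N -> Q (u `\` w) = 0.
  move=> u v w Gu Gv Gw p sub.
  have GD : GA (u `\` w) by apply: sig_setD.
  have h0 : Q ((u `\` w) `&` v) = 0.
    apply/eqP; rewrite eq_le measure_ge0 andbT -QN.
    apply: le_measure; rewrite ?inE //.
    by apply: measurableI; [apply: mA|apply: mB].
  move: h0; rewrite ind // => /eqP; rewrite mule_eq0 => /orP[/eqP //|/eqP Qv].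
  move: p; rewrite ind // Qv mule0 ltxx //.
have D1 : Q (a `\` a') = 0.
  apply: (key a b a') => // x [[ax na'x] bx]; apply: sN => /= h.
  by apply: na'x; case: (h.1 (conj ax bx)).
have D2 : Q (a' `\` a) = 0.
  apply: (key a' b' a) => // x [[ax na'x] bx]; apply: sN => /= h.
  by apply: na'x; case: (h.2 (conj ax bx)).
exists ((a `\` a') `|` (a' `\` a)); split.
- apply: measurableU; apply: mA; exact: sig_setD.
- apply/eqP; rewrite eq_le measure_ge0 andbT.
  apply: (le_trans (measureU2 _ _ _)); first (apply: mA; exact: sig_setD).
    apply: mA; exact: sig_setD.
  by rewrite [X in (X + _ <= _)%E]D1 [X in (_ + X <= _)%E]D2 adde0.
- move=> x /= h.
  case: (pselect (a x)) => ax; case: (pselect (a' x)) => a'x.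
  + by exfalso; apply: h; split.
  + by left.
  + by right.
  + by exfalso; apply: h; split.
Qed.

End S.

Theorem lemma2p1 (d : measure_display) (Theta : measurableType d) (R : realType)
  (Q : probability Theta R) (g : set Theta) (GA GB : set (set Theta))
  (A B : Theta -> \bar R) :
  measurable g -> (0 < Q g)%E ->
  sub_sigma_field GA -> sub_sigma_field GB -> indep_sigma Q GA GB ->
  measurable_wrt GA A -> (forall x, (0 <= A x)%E) ->
  measurable_wrt GB B -> (forall x, (0 <= B x)%E) ->
  {ae Q, forall x, ((\1_g x)%:E = A x * B x)%E} ->
  exists a b, [/\ GA a, GB b,
    {ae Q, forall x, g x <-> (a `&` b) x} &
    forall a' b', GA a' -> GB b' ->
      {ae Q, forall x, g x <-> (a' `&` b') x} ->
      {ae Q, forall x, a x <-> a' x} /\ {ae Q, forall x, b x <-> b' x}].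
Proof.
move=> mg Qg sA sB ind mAf A0 mBf B0 hAB.
set Y : set (\bar R) := [set` Interval (BRight (0%E : \bar R)) (BRight (+oo%E : \bar R))].
have mY : measurable Y by exact: emeasurable_itv.
exists (A @^-1` Y), (B @^-1` Y).
have GAa : GA (A @^-1` Y) by apply: mAf.
have GBb : GB (B @^-1` Y) by apply: mBf.
have hg : {ae Q, forall x, g x <-> (A @^-1` Y `&` B @^-1` Y) x}.
  apply: filterS hAB => x /= e.
  rewrite /Y /= !in_itv /= !leey !andbT.
  case: (pselect (g x)) => gx.
  - move: e; rewrite indicE mem_set //= => e.
    have : (A x * B x)%E != 0 by rewrite -e.
    rewrite mule_eq0 negb_or => /andP[nA nB].
    by split => // _; split; rewrite lt_neqAle eq_sym ?nA ?nB ?A0 ?B0.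
  - move: e; rewrite indicE memNset //= => /esym/eqP.
    rewrite mule_eq0 => /orP[/eqP->|/eqP->]; split => // -[]; by rewrite ltxx.
split => // a' b' Ga' Gb' hg'.
have mab : measurable (A @^-1` Y `&` B @^-1` Y).
  by apply: measurableI; [apply: sA.2|apply: sB.2].
have mab' : measurable (a' `&` b').
  by apply: measurableI; [apply: sA.2|apply: sB.2].
have p1 := @pos_ae _ _ _ Q _ _ mg mab Qg hg.
have p2 := @pos_ae _ _ _ Q _ _ mg mab' Qg hg'.
have hc : {ae Q, forall x, (A @^-1` Y `&` B @^-1` Y) x <-> (a' `&` b') x}.
  apply: filterS (filterI hg hg') => x /= [h1 h2].
  by split => h; [apply/h2/h1|apply/h1/h2].
split; first exact: (@uniq_half _ _ _ Q _ _ _ _ _ _ sA sB ind GAa GBb Ga' Gb' p1 p2 hc).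
have ind' : indep_sigma Q GB GA by move=> u v Gu Gv; rewrite setIC ind // muleC.
apply: (@uniq_half _ _ _ Q _ _ _ _ _ _ sB sA ind' GBb GAa Gb' Ga'); rewrite ?(setIC (B @^-1` Y)) ?(setIC b') //.
Qed.
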